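(* Let $p$ be an odd prime, $R=F_p+vF_p$ with $v^2=v$, let $\vartheta=1-2v$ or $\vartheta=-1+2v$, and let $C$ be a $\vartheta$-constacyclic code of length $n$ over $R$ with generating set in standard form $\{vg_{1-v}(x),(1-v)g_v(x)\}$. Then $\phi_\vartheta(C)=[g_{1-v}(x)g_v(x)]$, the cyclic code of length $2n$ over $F_p$ (ideal of $F_p[x]/\langle x^{2n}-1\rangle$) generated by $g_{1-v}(x)g_v(x)$.
   Context: Write $\vartheta=\lambda+v\mu$ with $\lambda,\mu\in F_p$. A $\vartheta$-constacyclic code of length $n$ over $R$ is an $R$-submodule of $R^n$ closed under $(c_0,\dots,c_{n-1})\mapsto(\vartheta c_{n-1},c_0,\dots,c_{n-2})$, identified with an ideal of $R_n=R[x]/\langle x^n-\vartheta\rangle$ via $(c_i)\mapsto\sum c_ix^i$. A set $\{vg_1(x),(1-v)g_2(x)\}$ is a generating set in standard form for $C$ if it generates $C$ as an ideal, each $g_i\in F_p[x]$ is monic or $0$, $g_1\mid x^n-(\lambda+\mu)$ if $g_1\ne0$, and $g_2\mid x^n-\lambda$ if $g_2\neq0$. The Gray map $\phi_\vartheta:R_n\to F_p[x]/\langle x^{2n}-1\rangle$ sends $f(x)=r(x)+vq(x)$ ($r,q\in F_p[x]$ of degree $<n$) to $\lambda(\lambda+\mu)q(x)+x^n[-\mu r(x)-(\lambda+\mu)q(x)]$. For a monic divisor $g$ of $x^{2n}-1$, $[g(x)]$ is the ideal of $F_p[x]/\langle x^{2n}-1\rangle$ generated by $g$. *)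

(* Defs.v *)
From mathcomp Require Import all_boot all_order all_algebra.
Set Implicit Arguments. Unset Strict Implicit. Unset Printing Implicit Defensive.
Import GRing.Theory.
Local Open Scope ring_scope.

(* A polynomial over R = F + vF (v^2 = v) is represented as a pair (r, q) of
   polynomials over F, standing for r(x) + v q(x). *)
Definition Rpoly (F : fieldType) := ({poly F} * {poly F})%type.

Definition addR (F : fieldType) (a b : Rpoly F) : Rpoly F := (a.1 + b.1, a.2 + b.2).

(* (r1 + v q1)(r2 + v q2) = r1 r2 + v (r1 q2 + q1 r2 + q1 q2), using v^2 = v *)
Definition mulR (F : fieldType) (a b : Rpoly F) : Rpoly F :=
  (a.1 * b.1, a.1 * b.2 + a.2 * b.1 + a.2 * b.2).

Definition vtimes (F : fieldType) (g : {poly F}) : Rpoly F := (0, g).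
Definition omvtimes (F : fieldType) (g : {poly F}) : Rpoly F := (g, - g).

(* x^n - theta, with theta = lam + v mu *)
Definition xn_theta (F : fieldType) (n : nat) (lam mu : F) : Rpoly F :=
  ('X^n - lam%:P, - mu%:P).

(* Membership in the ideal <v g1, (1-v) g2> of R_n = R[x]/<x^n - theta>,
   an element of R_n being represented by its unique representative
   r + v q with deg r, deg q < n. *)
Definition in_Rn_ideal (F : fieldType) (n : nat) (lam mu : F)
    (g1 g2 : {poly F}) (c : Rpoly F) : Prop :=
  (size c.1 <= n)%N /\ (size c.2 <= n)%N /\
  exists a b h : Rpoly F,
    c = addR (addR (mulR a (vtimes g1)) (mulR b (omvtimes g2)))
             (mulR h (xn_theta n lam mu)).

Definition gray (F : fieldType) (n : nat) (lam mu : F) (c : Rpoly F) : {poly F} :=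
  (lam * (lam + mu)) *: c.2 + 'X^n * ((- mu) *: c.1 - (lam + mu) *: c.2).

(* Membership in the ideal [g] of F[x]/<x^m - 1>, elements represented by
   their representative of degree < m. *)
Definition in_cyc_ideal (F : fieldType) (m : nat) (g f : {poly F}) : Prop :=
  (size f <= m)%N /\ exists a h : {poly F}, f = a * g + h * ('X^m - 1).

(* Main.v *)
Require Import Defs.
From mathcomp Require Import all_boot all_order all_algebra.
From mathcomp Require Import ring zify.
Import GRing.Theory.
Local Open Scope ring_scope.

Section Aux.
Variable F : fieldType.
Variables (n : nat) (lam mu : F).
Hypothesis htheta : (lam = 1 /\ mu = -2) \/ (lam = -1 /\ mu = 2).

Lemma KI (r q : {poly F}) :
  gray n lam mu (r, q) = (- (lam + mu)) *: ((r + q) * ('X^n - lam%:P)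
                                     + r * ('X^n - (lam + mu)%:P)).
Proof. by case: htheta => [[-> ->]|[-> ->]]; rewrite /gray /= -?mul_polyC; ring. Qed.

Lemma I1 (r q : {poly F}) :
  ((-2) * (lam + mu)) *: (r + q) = (r + q + r) * ('X^n - (lam + mu)%:P)
                             + (lam + mu) *: gray n lam mu (r, q).
Proof. by case: htheta => [[-> ->]|[-> ->]]; rewrite /gray /= -?mul_polyC; ring. Qed.

Lemma I2 (r q : {poly F}) :
  (2 * (lam + mu)) *: r = (r + (r + q)) * ('X^n - lam%:P)
                             + (lam + mu) *: gray n lam mu (r, q).
Proof. by case: htheta => [[-> ->]|[-> ->]]; rewrite /gray /= -?mul_polyC; ring. Qed.

Lemma IX : 'X^(2 * n) - 1 = ('X^n - lam%:P) * ('X^n - (lam + mu)%:P).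
Proof.
rewrite mul2n -addnn exprD.
by case: htheta => [[-> ->]|[-> ->]]; rewrite -?mul_polyC; ring.
Qed.

Lemma He : (lam + mu) * (lam + mu) = 1.
Proof. by case: htheta => [[-> ->]|[-> ->]]; ring. Qed.

Lemma IG (t : F) (ht : 2 * t = 1) (lo hi : {poly F}) :
  gray n lam mu (t *: (lo - (lam + mu) *: hi), - lo) = lo + 'X^n * hi.
Proof.
case: htheta => [[hl hm]|[hl hm]].
  have E : gray n lam mu (t *: (lo - (lam + mu) *: hi), - lo) - (lo + 'X^n * hi)
      = (1 - 2 * t)%:P * (- ('X^n * (lo + hi))).
    by rewrite /gray /= hl hm -?mul_polyC; ring.
  by apply/eqP; rewrite -subr_eq0 E ht subrr polyC0 mul0r.
have E : gray n lam mu (t *: (lo - (lam + mu) *: hi), - lo) - (lo + 'X^n * hi)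
    = (1 - 2 * t)%:P * ('X^n * (lo - hi)).
  by rewrite /gray /= hl hm -?mul_polyC; ring.
by apply/eqP; rewrite -subr_eq0 E ht subrr polyC0 mul0r.
Qed.

Lemma size_gray (r q : {poly F}) :
  (size r <= n)%N -> (size q <= n)%N -> (size (gray n lam mu (r, q)) <= 2 * n)%N.
Proof.
move=> sr sq; rewrite /gray /=.
apply: leq_trans (size_polyD _ _) _; rewrite geq_max; apply/andP; split.
  by apply: leq_trans (size_scale_leq _ _) _; rewrite (leq_trans sq) // mul2n -addnn leq_addl.
apply: leq_trans (size_polyMleq _ _) _; rewrite size_polyXn.
have : (size ((- mu) *: r - (lam + mu) *: q)%R <= n)%N.
  apply: leq_trans (size_polyD _ _) _; rewrite geq_max size_polyN.
  by rewrite (leq_trans (size_scale_leq _ _)) // (leq_trans (size_scale_leq _ _)).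
by rewrite addSn /= mul2n -addnn leq_add2l.
Qed.

Lemma ideal_repr (u1 u2 g1 g2 r q : {poly F}) :
  u2 * g2 = r -> u1 * g1 = r + q ->
  (r, q) = addR (addR (mulR (0, u1) (vtimes g1)) (mulR (u2, 0) (omvtimes g2)))
                (mulR 0 (xn_theta n lam mu)).
Proof.
move=> Er Es.
have Hq : q = u1 * g1 - u2 * g2 by rewrite Es -Er addrC addKr.
rewrite /addR /mulR /=; congr pair; first by rewrite -Er; ring.
by rewrite Hq; ring.
Qed.

End Aux.

Theorem corollary3p11 (p : nat) (pr_p : prime p) (odd_p : odd p)
    (n : nat) (n_gt0 : (0 < n)%N) (lam mu : 'F_p)
    (htheta : (lam = 1 /\ mu = -2) \/ (lam = -1 /\ mu = 2))
    (g1 g2 : {poly 'F_p})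
    (g1_monic : g1 \is monic) (g1_dvd : g1 %| 'X^n - (lam + mu)%:P)
    (g2_monic : g2 \is monic) (g2_dvd : g2 %| 'X^n - lam%:P) :
  forall f : {poly 'F_p},
    in_cyc_ideal (2 * n) (g1 * g2) f <->
    exists c : Rpoly 'F_p, in_Rn_ideal n lam mu g1 g2 c /\ gray n lam mu c = f.
Proof.
have two : (2 : 'F_p) != 0.
  rewrite -(dvdn_pcharf (pchar_Fp pr_p)); apply/negP => /(dvdn_leq (isT : (0 < 2)%N)) le2.
  have p2 : p = 2%N by move: (prime_gt1 pr_p) le2; lia.
  by move: odd_p; rewrite p2.
have e0 : lam + mu != 0.
  apply/negP => /eqP e0; move: (@He _ _ _ htheta); rewrite e0 mul0r => /eqP.
  by rewrite eq_sym oner_eq0.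
have Xn0 : ('X^n : {poly 'F_p}) != 0 by rewrite monic_neq0 // monicXn.
move=> f; split.
- move=> [szf [A [H Hf]]].
  have g1f : g1 %| f.
    rewrite Hf (@IX _ n _ _ htheta); apply: dvdp_add; first by apply: dvdp_mull; apply: dvdp_mulr.
    by apply: dvdp_mull; apply: dvdp_mull.
  have g2f : g2 %| f.
    rewrite Hf (@IX _ n _ _ htheta); apply: dvdp_add; first by apply: dvdp_mull; apply: dvdp_mull.
    by apply: dvdp_mull; apply: dvdp_mulr.
  set lo := f %% 'X^n; set hi := f %/ 'X^n.
  set t : 'F_p := 2^-1.
  have ht : 2 * t = 1 by rewrite /t mulfV.
  set r := t *: (lo - (lam + mu) *: hi).
  have Gf : gray n lam mu (r, - lo) = f.
    by rewrite (@IG _ n _ _ htheta) // [RHS](divp_eq f 'X^n) mulrC addrC.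
  have slo : (size lo <= n)%N.
    by move: (ltn_modp f 'X^n); rewrite Xn0 size_polyXn.
  have shi : (size hi <= n)%N.
    by rewrite /hi size_divp // size_polyXn /= leq_subLR addnn -mul2n.
  have sr : (size r <= n)%N.
    apply: leq_trans (size_scale_leq _ _) _.
    apply: leq_trans (size_polyD _ _) _; rewrite geq_max size_polyN slo /=.
    exact: leq_trans (size_scale_leq _ _) _.
  have c1 : (-2) * (lam + mu) != 0 by rewrite mulf_neq0 // oppr_eq0.
  have c2 : 2 * (lam + mu) != 0 by rewrite mulf_neq0.
  have d1 : g1 %| r + - lo.
    rewrite -(dvdpZr _ _ c1) (@I1 _ n _ _ htheta r (- lo)) Gf.
    by apply: dvdp_add; [apply: dvdp_mull | rewrite dvdpZr].
  have d2 : g2 %| r.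
    rewrite -(dvdpZr _ _ c2) (@I2 _ n _ _ htheta r (- lo)) Gf.
    by apply: dvdp_add; [apply: dvdp_mull | rewrite dvdpZr].
  exists (r, - lo); split => //; split => //; split; first by rewrite size_polyN.
  exists (0, (r + - lo) %/ g1), ((r %/ g2), 0), 0.
  by apply: ideal_repr; apply: divpK.
- move=> [[r q] [[sr [sq [a [b [h Hc]]]]] Hf]].
  have [k1 Hk1] := dvdpP _ _ g1_dvd.
  have [k2 Hk2] := dvdpP _ _ g2_dvd.
  move: Hc; rewrite /addR /mulR /= => -[Er Eq].
  have Ew2 : r = (b.1 + h.1 * k2) * g2.
    have HX : 'X^n = k2 * g2 + lam%:P by rewrite -Hk2 subrK.
    by rewrite Er HX; ring.
  have Ew1 : r + q = (a.1 + a.2 + (h.1 + h.2) * k1) * g1.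
    have HX : 'X^n = k1 * g1 + (lam + mu)%:P by rewrite -Hk1 subrK.
    by rewrite Er Eq HX; ring.
  split; first by rewrite -Hf; apply: size_gray.
  exists (- (lam + mu)%:P * ((a.1 + a.2 + (h.1 + h.2) * k1) * k2
                          + (b.1 + h.1 * k2) * k1)), 0.
  rewrite -Hf (@KI _ n _ _ htheta) Ew1 Ew2 Hk1 Hk2 -?mul_polyC.
  ring.
Qed.
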